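(* Let $f\geq 1$, $\mathbf{K}=\mathbf{Q}(\zeta_f)$, $n=\varphi(f)$, and let $A$ be a $d\times d$ unitriangular matrix (upper triangular with ones on the diagonal) with coefficients in $\mathbf{K}$ such that every coefficient, written in the power basis $1,\zeta_f,\dots,\zeta_f^{n-1}$, has all its rational coordinates bounded by $1$ in absolute value. Then $\|A\|\leq dn^{3/2}$ and $\|A^{-1}\|=(2n)^{O(d)}$.
   Context: $\mathbf{K}^d$ carries the Hermitian form $\langle x,y\rangle=\sum_t\mathrm{tr}_{\mathbf{K}/\mathbf{Q}}(x_t\overline{y_t})$ and $\|\cdot\|$ is the induced operator norm on matrices. *)

(* Defs.v *)
(* The cyclotomic field K = Q(zeta_f) is realised inside the
   algebraic complex numbers algC as Q[z] for z a primitive f-th root of unity.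
   An element of K is represented by a rational polynomial p, standing for
   p(z); a vector of K^d by a column vector of rational polynomials, and a
   d x d matrix over K by a matrix of rational polynomials.  Since evaluation
   at z is a ring morphism, (A *m P) represents the product A x. *)
From HB Require Import structures.
From mathcomp Require Import all_boot all_order all_algebra algC.
Set Implicit Arguments. Unset Strict Implicit. Unset Printing Implicit Defensive.
Import Order.TTheory GRing.Theory Num.Theory.
Local Open Scope ring_scope.

Definition ev (p : {poly rat}) (x : algC) : algC := (map_poly (@ratr algC) p).[x].

Definition trK (f : nat) (z : algC) (p : {poly rat}) : algC :=
  \sum_(k < f | coprime k f) ev p (z ^+ k).

(* complex conjugation on K: conj(p(z)) = p(z^{-1}) = p(z^{f-1}) *)
Definition conjK (f : nat) (p : {poly rat}) : {poly rat} := p \Po 'X^(f.-1).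

Definition hermK (f : nat) (z : algC) (d : nat) (x y : 'cV[{poly rat}]_d) : algC :=
  \sum_(t < d) trK f z (x t 0 * conjK f (y t 0)).

Definition normK (f : nat) (z : algC) (d : nat) (x : 'cV[{poly rat}]_d) : algC :=
  sqrtC (hermK f z x x).

Definition opnorm_le (f : nat) (z : algC) (d : nat) (M : 'M[{poly rat}]_d) (c : algC) : Prop :=
  forall x : 'cV[{poly rat}]_d, normK f z (M *m x) <= c * normK f z x.

(* A has coefficients in K written in the power basis 1, z, ..., z^(n-1)
   (polynomials of size <= n) with all rational coordinates bounded by 1 *)
Definition coords_bounded (n d : nat) (A : 'M[{poly rat}]_d) : Prop :=
  forall i j : 'I_d, (size (A i j) <= n)%N /\ forall l : nat, `|(A i j)`_l| <= 1.

Definition unitriangular (d : nat) (A : 'M[{poly rat}]_d) : Prop :=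
  (forall i : 'I_d, A i i = 1) /\ (forall i j : 'I_d, (j < i)%N -> A i j = 0).

Definition is_inverseK (z : algC) (d : nat) (A B : 'M[{poly rat}]_d) : Prop :=
  forall i j : 'I_d, ev ((A *m B) i j) z = (i == j)%:R.

(* Main.v *)
Require Import Defs.
From HB Require Import structures.
From mathcomp Require Import all_boot all_order all_algebra algC cyclotomic.
From mathcomp Require Import ring lra.
Import Order.TTheory GRing.Theory Num.Theory.
Local Open Scope ring_scope.
Lemma CS1 (d : nat) (y : 'I_d -> algC) : (forall i, 0 <= y i) ->
  (\sum_i y i) ^+ 2 <= d%:R * \sum_i y i ^+ 2.
Proof.
move=> hy.
have H : 0 <= \sum_i \sum_j (y i - y j) ^+ 2.
  apply: sumr_ge0 => i _; apply: sumr_ge0 => j _.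
  rewrite -real_normK ?exprn_ge0 //.
  by apply: rpredB; apply: ger0_real.
have E1 i : \sum_j (y i - y j) ^+ 2 =
   d%:R * y i ^+ 2 - 2%:R * y i * \sum_j y j + \sum_j y j ^+ 2.
  have -> : d%:R * y i ^+ 2 = \sum_(j < d) y i ^+ 2 by rewrite sumr_const card_ord mulr_natl.
  rewrite mulr_sumr -sumrB -big_split /=; apply: eq_bigr => j _; ring.
have E : \sum_i \sum_j (y i - y j) ^+ 2 =
   2%:R * (d%:R * \sum_i y i ^+ 2 - (\sum_i y i) ^+ 2).
  under eq_bigr => i _ do rewrite E1.
  rewrite big_split /= sumrB -mulr_sumr -mulr_suml sumr_const card_ord mulr_natl -mulr_sumr.
  ring.
move: H; rewrite E => H.
rewrite -subr_ge0; move: H; rewrite pmulr_rge0 //.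
Qed.

Lemma sumsq_le (d : nat) (y : 'I_d -> algC) : (forall i, 0 <= y i) ->
  \sum_i y i ^+ 2 <= (\sum_i y i) ^+ 2.
Proof.
move=> hy; rewrite expr2 mulr_suml; apply: ler_sum => i _.
rewrite expr2; apply: ler_wpM2l => //.
rewrite (bigD1 i) //= lerDl; apply: sumr_ge0 => j _; exact: hy.
Qed.

Lemma lemA (d : nat) (a : 'I_d -> 'I_d -> algC) (m : algC) (u : 'I_d -> algC) :
  0 <= m -> (forall i j, `|a i j| <= m) ->
  \sum_i `|\sum_j a i j * u j| ^+ 2 <= (d%:R ^+ 2 * m ^+ 2) * \sum_j `|u j| ^+ 2.
Proof.
move=> hm ha.
have H1 i : `|\sum_j a i j * u j| ^+ 2 <= m ^+ 2 * (d%:R * \sum_j `|u j| ^+ 2).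
  apply: le_trans (_ : (m * \sum_j `|u j|) ^+ 2 <= _).
    rewrite ler_pXn2r ?nnegrE ?mulr_ge0 ?sumr_ge0 //.
    apply: le_trans (ler_norm_sum _ _ _) _.
    rewrite mulr_sumr; apply: ler_sum => j _; rewrite normrM.
    by apply: ler_wpM2r.
  rewrite exprMn; apply: ler_wpM2l; first exact: exprn_ge0.
  exact: CS1.
apply: le_trans (ler_sum _ (fun i _ => H1 i)) _.
rewrite sumr_const card_ord -mulr_natl.
rewrite le_eqVlt; apply/orP; left; apply/eqP; ring.
Qed.

Lemma split_suffix (d : nat) (F : 'I_d -> algC) (i : 'I_d) :
  \sum_(j : 'I_d | (i <= j)%N) F j = F i + \sum_(j : 'I_d | (i < j)%N) F j.
Proof.
rewrite (bigD1 i) //=; congr (_ + _); apply: eq_bigl => j.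
rewrite ltn_neqAle andbC; congr (_ && _); by rewrite eq_sym.
Qed.

Lemma lemB (d : nat) (a : 'I_d -> 'I_d -> algC) (m : algC) (w u : 'I_d -> algC) :
 0 <= m -> (forall i j, `|a i j| <= m) -> (forall i, a i i = 1) ->
 (forall i j : 'I_d, (j < i)%N -> a i j = 0) ->
 (forall i, \sum_j a i j * w j = u i) ->
 \sum_j `|w j| ^+ 2 <= (d%:R * (m + 1) ^+ (2 * d)) * \sum_j `|u j| ^+ 2.
Proof.
move=> hm ha hdiag htri heq.
pose S k := \sum_(j : 'I_d | (k <= j)%N) `|w j|.
pose T k := \sum_(j : 'I_d | (k <= j)%N) `|u j|.
have hm1 : 1 <= m + 1 by rewrite lerDr.
have Tge0 k : 0 <= T k by apply: sumr_ge0.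
have key (i : 'I_d) : `|w i| <= `|u i| + m * S i.+1.
  have hu : u i = w i + \sum_(j | j != i) a i j * w j.
    by rewrite -heq (bigD1 i) //= hdiag mul1r.
  have -> : w i = u i - \sum_(j | j != i) a i j * w j by rewrite hu addrK.
  apply: le_trans (ler_normB _ _) _; rewrite lerD2l.
  apply: le_trans (ler_norm_sum _ _ _) _.
  apply: le_trans (_ : _ <= \sum_(j | j != i) (if (i < j)%N then m * `|w j| else 0)) _.
    apply: ler_sum => j hji; case: ifP => hij.
      by rewrite normrM; apply: ler_wpM2r.
    rewrite htri ?mul0r ?normr0 //.
    by rewrite ltn_neqAle val_eqE hji /= leqNgt hij.
  rewrite /S mulr_sumr big_mkcond /= [X in _ <= X]big_mkcond /=.
  apply: ler_sum => j _; case: eqP => [->|] //=.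
  by rewrite ltnn.
have claim k : (k <= d)%N -> S (d - k)%N <= (m + 1) ^+ k * T (d - k)%N.
  elim: k => [_|k IH hk].
    rewrite subn0 {1}/S big1 ?expr0 ?mul1r //.
    by move=> j hj; move: (ltn_ord j); rewrite ltnNge hj.
  have hlt : (d - k.+1 < d)%N by rewrite ltn_subrL; apply/andP; split => //; apply: leq_ltn_trans hk.
  pose i := Ordinal hlt.
  have e : (d - k)%N = i.+1 by rewrite /= subnSK.
  have IH' := IH (ltnW hk); rewrite e in IH'.
  change (S i <= (m + 1) ^+ k.+1 * T i).
  have eSi : S i = `|w i| + S i.+1 by rewrite /S (split_suffix _ (fun j => `|w j|) i).
  have eTi : T i = `|u i| + T i.+1 by rewrite /T (split_suffix _ (fun j => `|u j|) i).
  rewrite eSi eTi.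
  apply: le_trans (_ : `|u i| + (m + 1) * S i.+1 <= _).
    apply: le_trans (lerD (key i) (lexx (S i.+1))) _.
    by rewrite -addrA lerD2l mulrDl mul1r.
  rewrite mulrDr exprS -mulrA; apply: lerD.
    by rewrite mulrA -exprS ler_peMl // exprn_ege1.
  rewrite -mulrA; apply: ler_wpM2l; first exact: le_trans hm1. by [].
have H0 := claim d (leqnn d); rewrite subnn in H0.
have eS : S 0%N = \sum_j `|w j| by apply: eq_bigl.
have eT : T 0%N = \sum_j `|u j| by apply: eq_bigl.
rewrite eS eT in H0.
apply: le_trans (sumsq_le _ (fun j => `|w j|) (fun j => normr_ge0 _)) _.
apply: le_trans (_ : ((m + 1) ^+ d * \sum_j `|u j|) ^+ 2 <= _).
  rewrite ler_pXn2r ?nnegrE ?sumr_ge0 ?mulr_ge0 ?exprn_ge0 ?addr_ge0 //.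
  by apply: sumr_ge0 => *; exact: normr_ge0.
rewrite exprMn -exprM mulnC [d%:R * _]mulrC -mulrA.
apply: ler_wpM2l; first by rewrite exprn_ge0 // addr_ge0.
exact: CS1.
Qed.


Lemma evD p q x : ev (p + q) x = ev p x + ev q x.
Proof. by rewrite /ev rmorphD hornerD. Qed.
Lemma evB p q x : ev (p - q) x = ev p x - ev q x.
Proof. by rewrite /ev rmorphB hornerD hornerN. Qed.
Lemma evM p q x : ev (p * q) x = ev p x * ev q x.
Proof. by rewrite /ev rmorphM hornerM. Qed.
Lemma evn k x : ev (k%:R) x = k%:R.
Proof. by rewrite /ev rmorph_nat -polyC_natr hornerC. Qed.
Lemma ev_sum (I : finType) (F : I -> {poly rat}) x :
  ev (\sum_i F i) x = \sum_i ev (F i) x.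
Proof. by rewrite /ev rmorph_sum horner_sum. Qed.

Definition evm (m n : nat) (M : 'M[{poly rat}]_(m, n)) (y : algC) : 'M[algC]_(m, n) :=
  \matrix_(i, j) ev (M i j) y.
Arguments evm {m n}.

Lemma evmM (m n p : nat) (M : 'M[{poly rat}]_(m, n)) (N : 'M[{poly rat}]_(n, p)) y :
  evm (M *m N) y = evm M y *m evm N y.
Proof.
apply/matrixP => i j; rewrite !mxE ev_sum; apply: eq_bigr => k _.
by rewrite !mxE evM.
Qed.

Lemma root_transfer (f : nat) (z : algC) (p : {poly rat}) (k : nat) :
  f.-primitive_root z -> coprime k f -> ev p z = 0 -> ev p (z ^+ k) = 0.
Proof.
move=> hz hk hp.
have [p0 [hmin _] hdiv] := minCpolyP z.
have hd : p0 %| p by rewrite -hdiv /root -/(ev p z) hp.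
rewrite -(divpK hd) evM.
have -> : ev p0 (z ^+ k) = 0.
  apply/eqP; rewrite /ev -hmin (minCpoly_cyclotomic hz) -/(root _ _).
  by rewrite root_cyclotomic // prim_root_exp_coprime.
by rewrite mulr0.
Qed.

Lemma norm_pow1 (f : nat) (z : algC) (k : nat) :
  (0 < f)%N -> f.-primitive_root z -> `|z ^+ k| = 1.
Proof.
move=> hf hz.
have h1 : `|z| ^+ f = 1 by rewrite -normrX prim_expr_order // normr1.
have : `|z| == 1 by rewrite -(pexpr_eq1 hf) ?h1.
by move/eqP => h; rewrite normrX h; apply: expr1n.
Qed.

Lemma conj_pow (f : nat) (y : algC) :
  (0 < f)%N -> y ^+ f = 1 -> `|y| = 1 -> y ^+ f.-1 = y^*.
Proof.
move=> hf hyf hy.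
have hy0 : y != 0 by apply/eqP => h; move: hy; rewrite h normr0 => /eqP; rewrite eq_sym oner_eq0.
have e1 : y * y ^+ f.-1 = 1 by rewrite -exprS prednK.
have e2 : y * y^* = 1 by rewrite -normCK hy expr1n.
by apply: (mulfI hy0); rewrite e1 e2.
Qed.

Lemma ev_conj (p : {poly rat}) (y : algC) : ev p (y^*) = (ev p y)^*.
Proof.
rewrite /ev -horner_map /=; congr (_.[_]).
rewrite -map_poly_comp; apply: eq_map_poly => a /=.
by rewrite fmorph_rat.
Qed.

Lemma ev_normsq (f : nat) (z : algC) (k : nat) (p : {poly rat}) :
  (0 < f)%N -> f.-primitive_root z ->
  ev (p * conjK f p) (z ^+ k) = `|ev p (z ^+ k)| ^+ 2.
Proof.
move=> hf hz; set y := z ^+ k.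
have hyf : y ^+ f = 1.
  by rewrite /y -exprM mulnC exprM (prim_expr_order hz); apply: expr1n.
rewrite evM /conjK /ev map_comp_poly horner_comp map_polyXn hornerXn.
rewrite (conj_pow _ _ hf hyf (norm_pow1 _ _ k hf hz)) -/(ev p (y^*)) ev_conj.
by rewrite normCK.
Qed.

Lemma ev_bound (n : nat) (p : {poly rat}) (y : algC) :
  (size p <= n)%N -> (forall l, `|p`_l| <= 1) -> `|y| = 1 -> `|ev p y| <= n%:R.
Proof.
move=> hs hc hy.
rewrite /ev horner_coef size_map_poly.
apply: le_trans (ler_norm_sum _ _ _) _.
apply: le_trans (_ : _ <= \sum_(i < size p) (1 : algC)) _.
  apply: ler_sum => i _; rewrite coef_map normrM normrX hy expr1n mulr1 -ratr_norm.
  by rewrite -(rmorph1 ratr) ler_rat.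
by rewrite sumr_const card_ord ler_nat.
Qed.

Lemma herm_expand (f : nat) (z : algC) (d : nat) (x : 'cV[{poly rat}]_d) :
  (0 < f)%N -> f.-primitive_root z ->
  hermK f z x x = \sum_(k < f | coprime k f) \sum_t `|ev (x t 0) (z ^+ k)| ^+ 2.
Proof.
move=> hf hz; rewrite /hermK /trK exchange_big /=.
apply: eq_bigr => k _; apply: eq_bigr => t _.
exact: ev_normsq.
Qed.

Lemma glue (f : nat) (z : algC) (d : nat) (M : 'M[{poly rat}]_d) (c : algC) :
  (0 < f)%N -> f.-primitive_root z -> 0 <= c ->
  (forall (x : 'cV[{poly rat}]_d) (k : nat), coprime k f ->
     \sum_t `|ev ((M *m x) t 0) (z ^+ k)| ^+ 2 <= c ^+ 2 * \sum_t `|ev (x t 0) (z ^+ k)| ^+ 2) ->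
  opnorm_le f z M c.
Proof.
move=> hf hz hc H x.
rewrite /normK -(sqrCK hc) -sqrtCM ?nnegrE ?exprn_ge0 //; last first.
  rewrite herm_expand //; apply: sumr_ge0 => k _; apply: sumr_ge0 => t _.
  exact: exprn_ge0.
rewrite ler_sqrtC ?nnegrE.
- rewrite !herm_expand // mulr_sumr; apply: ler_sum => k hk; exact: H.
- rewrite herm_expand //; apply: sumr_ge0 => k _; apply: sumr_ge0 => t _.
  exact: exprn_ge0.
- rewrite mulr_ge0 ?exprn_ge0 // herm_expand //; apply: sumr_ge0 => k _; apply: sumr_ge0 => t _.
  exact: exprn_ge0.
Qed.

Lemma natbound (d n : nat) : (0 < n)%N ->
  (d * (n + 1) ^ (2 * d) <= ((2 * n) ^ (2 * d)) ^ 2)%N.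
Proof.
move=> hn; case: d => [|d]; first by [].
rewrite expnS expn1 leq_mul //.
  apply: leq_trans (ltnW (ltn_expl d.+1 (isT : (1 < 2)%N))) _.
  apply: leq_trans (_ : (2 ^ (2 * d.+1) <= _)%N).
    by apply: leq_pexp2l => //; rewrite leq_pmull.
  by rewrite leq_exp2r ?muln_gt0 //; rewrite leq_pmulr.
by rewrite leq_exp2r ?muln_gt0 //; rewrite mul2n -addnn leq_add2l.
Qed.

Theorem lemma13 :
  exists C : nat,
  forall (f : nat) (z : algC), (1 <= f)%N -> f.-primitive_root z ->
  forall (d : nat) (A : 'M[{poly rat}]_d),
    unitriangular A -> coords_bounded (totient f) A ->
    opnorm_le f z A (d%:R * sqrtC ((totient f)%:R ^+ 3)) /\
    (forall B : 'M[{poly rat}]_d, is_inverseK z A B ->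
       opnorm_le f z B (((2 * totient f)%:R) ^+ (C * d))).
Proof.
exists 2%N => f z hf hz d A [hdiag htri] hcoef.
have hn : (0 < totient f)%N by rewrite totient_gt0.
set n := totient f in hn hcoef *.
have hent k i j : `|ev (A i j) (z ^+ k)| <= n%:R.
  have [hs hc] := hcoef i j.
  exact: ev_bound hs hc (norm_pow1 _ _ k hf hz).
have evmx (M : 'M[{poly rat}]_d) (x : 'cV[{poly rat}]_d) y t :
    ev ((M *m x) t 0) y = \sum_j ev (M t j) y * ev (x j 0) y.
  by rewrite mxE ev_sum; apply: eq_bigr => j _; rewrite evM.
split.
  apply: glue => //; first by rewrite mulr_ge0 ?sqrtC_ge0 ?exprn_ge0.
  move=> x k hk.
  under eq_bigr => t _ do rewrite evmx.
  apply: le_trans (lemA _ _ _ _ (ler0n _ n) (hent k)) _.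
  apply: ler_wpM2r; first by apply: sumr_ge0 => *; exact: exprn_ge0.
  rewrite exprMn sqrtCK; apply: ler_wpM2l; first exact: exprn_ge0.
  by rewrite -!natrX ler_nat leq_pexp2l.
move=> B hinv.
apply: glue => //; first by rewrite exprn_ge0.
move=> x k hk; set y := z ^+ k.
have hAB i j : ev ((A *m B) i j) y = (i == j)%:R.
  have h0 : ev ((A *m B) i j - (i == j)%:R) z = 0 by rewrite evB evn hinv subrr.
  by move/eqP: (root_transfer _ _ _ _ hz hk h0); rewrite evB evn subr_eq0 => /eqP.
have heq i : \sum_j ev (A i j) y * ev ((B *m x) j 0) y = ev (x i 0) y.
  rewrite -evmx mulmxA evmx.
  rewrite (bigD1 i) //= hAB eqxx mul1r big1 ?addr0 // => j hj.
  by rewrite hAB eq_sym (negbTE hj) mul0r.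
apply: le_trans (lemB _ _ _ _ _ (ler0n _ n) (hent k) _ _ heq) _.
- by move=> i; rewrite hdiag /ev rmorph1 hornerC.
- by move=> i j hji; rewrite htri // /ev rmorph0 horner0.
apply: ler_wpM2r; first by apply: sumr_ge0 => *; exact: exprn_ge0.
rewrite natr1 -!natrX -natrM ler_nat -addn1.
exact: natbound.
Qed.
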